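(* For every finite simple graph $G$ and every integer $n\ge 2$, $$\chi_i(S_G^2)\le \chi_i(S_G^n)\le \chi_i(S_G^2)+1.$$
   Context: For a graph $H$, an injective $k$-coloring is a map $f:V(H)\to\{1,\dots,k\}$ such that any two distinct vertices $u,w$ with $f(u)=f(w)$ have no common neighbor. The injective chromatic number $\chi_i(H)$ is the least $k$ for which $H$ admits an injective $k$-coloring. For a graph $G$ and a positive integer $n$, the generalized Sierpiński graph $S_G^n$ has vertex set $V(G)^n$, and two vertices $(u_1,\dots,u_n)$, $(v_1,\dots,v_n)$ are adjacent if and only if there is $d\in\{1,\dots,n\}$ such that $u_i=v_i$ for all $i<d$, $u_dv_d\in E(G)$, and $u_i=v_d$ and $v_i=u_d$ for all $i>d$. (In particular $S_G^1\cong G$.) *)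

(* Defs.v *)
From mathcomp Require Import all_boot.
Set Implicit Arguments. Unset Strict Implicit. Unset Printing Implicit Defensive.

(* Generalized Sierpinski graph S_G^n on V(G)^n = {ffun 'I_n -> T}
   (coordinate i : 'I_n is the (i+1)-th coordinate of the paper). *)
Definition sierp_adj (T : finType) (e : rel T) (n : nat) : rel {ffun 'I_n -> T} :=
  fun u v =>
    [exists d : 'I_n,
      [&& [forall i : 'I_n, (i < d) ==> (u i == v i)],
          e (u d) (v d) &
          [forall i : 'I_n, (d < i) ==> ((u i == v d) && (v i == u d))]]].

Arguments sierp_adj {T} e n _ _.

Definition inj_colorable (V : finType) (e : rel V) (k : nat) : bool :=
  [exists f : {ffun V -> 'I_k},
    [forall u : V, forall w : V,
       ((u != w) && (f u == f w)) ==> ~~ [exists x : V, e u x && e w x]]].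

Lemma inj_colorable_exists (V : finType) (e : rel V) : exists k, inj_colorable e k.
Proof.
exists #|V|; apply/existsP; exists [ffun x => enum_rank x].
apply/forallP => u; apply/forallP => w; rewrite !ffunE.
apply/implyP => /andP[uw /eqP fe].
by move: uw; rewrite (enum_rank_inj fe) eqxx.
Qed.

Definition inj_chi (V : finType) (e : rel V) : nat :=
  ex_minn (inj_colorable_exists e).

(* Main.v *)
Require Import Defs.
From mathcomp Require Import all_boot zify.
Set Implicit Arguments. Unset Strict Implicit. Unset Printing Implicit Defensive.

Definition eat (T : finType) (e : rel T) n (d : 'I_n) (u v : {ffun 'I_n -> T}) : Prop :=
 [/\ forall i : 'I_n, i < d -> u i = v i, e (u d) (v d) &
     forall i : 'I_n, d < i -> u i = v d /\ v i = u d].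

Lemma sierpP (T : finType) (e : rel T) n u v :
  reflect (exists d : 'I_n, eat e d u v) (sierp_adj e n u v).
Proof.
apply: (iffP existsP) => [[d /and3P[/forallP H1 H2 /forallP H3]] | [d [H1 H2 H3]]];
  exists d.
- split => // i lt; first by apply/eqP; exact: (implyP (H1 i)).
  by have /andP[/eqP -> /eqP ->] := implyP (H3 i) lt.
- apply/and3P; split => //; apply/forallP => i; apply/implyP => lt.
  + by rewrite H1.
  + by have [-> ->] := H3 i lt; rewrite !eqxx.
Qed.

Lemma upper (T : finType) (e : rel T) m k : irreflexive e ->
  inj_colorable (sierp_adj e 2) k -> inj_colorable (sierp_adj e m.+2) k.+1.
Proof.
move=> irr /existsP[c /forallP Hc].
pose a : 'I_m.+2 := inord m.
have va : nat_of_ord a = m by rewrite /a inordK.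
pose b : 'I_m.+2 := ord_max.
have vb : nat_of_ord b = m.+1 by [].
pose pi (w : {ffun 'I_m.+2 -> T}) : {ffun 'I_2 -> T} :=
  [ffun i : 'I_2 => if val i == 0 then w a else w b].
pose psi := [ffun w : {ffun 'I_m.+2 -> T} =>
  if w a == w b then (ord_max : 'I_k.+1) else widen_ord (leqnSn k) (c (pi w))].
have cls : forall d : 'I_m.+2, d = b \/ d = a \/ d < m.
  move=> d; have : d < m \/ nat_of_ord d = m \/ nat_of_ord d = m.+1
    by have := ltn_ord d; lia.
  case=> [h|[h|h]]; [by right; right | right; left | left];
  by apply/val_inj; rewrite /= ?va.
have Fb : forall d u z, eat e d u z -> d = b ->
    (forall i : 'I_m.+2, i < m.+1 -> u i = z i) /\ e (u b) (z b).
  by move=> d u z Hd hd; subst d; case: Hd => H1 H2 H3; split.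
have Fa : forall d u z, eat e d u z -> d = a ->
    [/\ u b = z a, z b = u a & e (u a) (z a)].
  move=> d u z Hd hd; subst d; case: Hd => H1 H2 H3; have [] := H3 b; first by rewrite va vb.
  by [].
have Fl : forall (d : 'I_m.+2) u z, eat e d u z -> d < m ->
    [/\ u a = z d, u b = z d, z a = u d & z b = u d].
  move=> d u z [H1 H2 H3] h.
  have [] := H3 a; first by rewrite va.
  have [] := H3 b; first by rewrite vb; lia.
  by move=> -> -> -> ->.
have Fu : forall (d d' : 'I_m.+2) u u' z, eat e d u z -> eat e d' u' z ->
    d < m.+1 -> d' < m.+1 -> u = u'.
  have key : forall (d d' : 'I_m.+2) u u' z, eat e d u z -> eat e d' u' z ->
      d < d' -> d' < m.+1 -> False.
    move=> d d' u u' z [H1 H2 H3] [H1' H2' H3'] h h'.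
    have [_ E1] := H3 d' h.
    have [_ E2] : u b = z d /\ z b = u d by apply: H3; rewrite vb; lia.
    have [_ E3] : u' b = z d' /\ z b = u' d' by apply: H3'; rewrite vb; lia.
    by move: H2'; rewrite E1 -E3 E2 irr.
  move=> d d' u u' z Hd Hd' h h'.
  case: (ltngtP d d') => hd; first by case: (key _ _ _ _ _ Hd Hd' hd h').
    by case: (key _ _ _ _ _ Hd' Hd hd h).
  have ed : d = d' by apply/val_inj.
  subst d'; case: Hd Hd' => [H1 H2 H3] [H1' H2' H3'].
  apply/ffunP => i; case: (ltngtP i d) => hi.
  - by rewrite H1 // H1'.
  - by have [-> _] := H3 i hi; have [-> _] := H3' i hi.
  - have -> : i = d by apply/val_inj.
    have [_ <-] : u b = z d /\ z b = u d by apply: H3; rewrite vb; lia.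
    by have [_ <-] : u' b = z d /\ z b = u' d by apply: H3'; rewrite vb; lia.
have eqb : forall u u' : {ffun 'I_m.+2 -> T},
    (forall i : 'I_m.+2, i < m.+1 -> u i = u' i) -> u b = u' b -> u = u'.
  move=> u u' H Hb; apply/ffunP => i; case: (ltnP i m.+1) => h; first exact: H.
  have -> : i = b by apply/val_inj; rewrite /= ; have := ltn_ord i; lia.
  exact: Hb.
have piadj : forall d u z, eat e d u z -> (d = a \/ d = b) ->
    sierp_adj e 2 (pi u) (pi z).
  move=> d u z Hd hd; apply/sierpP; case: hd => hd.
  - have [E1 E2 E3] := Fa _ _ _ Hd hd.
    exists ord0; split => //; first by rewrite !ffunE.
    move=> [[|[|j]] Hj] //= _; rewrite !ffunE /=; by split.
  - have [H1 H2] := Fb _ _ _ Hd hd.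
    exists ord_max; split => //.
    + move=> [[|j] Hj] //= _; rewrite !ffunE /=; apply: H1; by rewrite va.
    + by rewrite !ffunE.
    + by move=> [j Hj] /=; lia.
apply/existsP; exists psi; apply/forallP => u; apply/forallP => u'.
apply/implyP => /andP[neq /eqP hpsi]; apply/negP.
move=> /existsP[z /andP[/sierpP[d Hd] /sierpP[d' Hd']]].
move: hpsi; rewrite !ffunE; case: eqP => cu; case: eqP => cu'.
-
  move=> _; move/eqP: neq; apply.
  have nA : forall dd uu, eat e dd uu z -> uu a = uu b -> dd = b \/ dd < m.
    move=> dd uu Hdd cuu; case: (cls dd) => [->|[hd|hd]]; [by left| |by right].
    have [E1 E2 E3] := Fa _ _ _ Hdd hd.
    by move: E3; rewrite -E1 cuu irr.
  case: (nA _ _ Hd cu) => hd; case: (nA _ _ Hd' cu') => hd'.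
  + have [H1 _] := Fb _ _ _ Hd hd; have [H1' _] := Fb _ _ _ Hd' hd'.
    apply: eqb => [i hi|]; first by rewrite H1 // H1'.
    by rewrite -cu -cu' H1 ?H1' // va.
  + have [_ H2] := Fb _ _ _ Hd hd; have [_ _ E3 E4] := Fl _ _ _ Hd' hd'.
    have [H1 _] := Fb _ _ _ Hd hd.
    by move: H2; rewrite -cu H1 ?va // E3 -E4 irr.
  + have [_ H2] := Fb _ _ _ Hd' hd'; have [_ _ E3 E4] := Fl _ _ _ Hd hd.
    have [H1 _] := Fb _ _ _ Hd' hd'.
    by move: H2; rewrite -cu' H1 ?va // E3 -E4 irr.
  + by apply: (Fu _ _ _ _ _ Hd Hd'); lia.
- by move/(congr1 val) => /= H; move: (ltn_ord (c (pi u'))); rewrite -H ltnn.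
- by move/(congr1 val) => /= H; move: (ltn_ord (c (pi u))); rewrite H ltnn.
- move/(congr1 val) => /= /val_inj hc.
  have nA : forall dd uu, eat e dd uu z -> uu a <> uu b -> dd = a \/ dd = b.
    move=> dd uu Hdd cuu; case: (cls dd) => [->|[->|hd]]; [by right|by left|].
    by have [E1 E2 _ _] := Fl _ _ _ Hdd hd; case: cuu; rewrite E1 E2.
  have hA := nA _ _ Hd cu; have hA' := nA _ _ Hd' cu'.
  have ep : pi u = pi u'.
    case: (eqVneq (pi u) (pi u')) => // np.
    have := Hc (pi u); move/forallP/(_ (pi u'))/implyP.
    rewrite np hc eqxx => /(_ isT) /negP; case; apply/existsP; exists (pi z).
    by rewrite (piadj _ _ _ Hd hA) (piadj _ _ _ Hd' hA').
  have ea : u a = u' a by move: (congr1 (fun f : {ffun 'I_2 -> T} => f (@ord0 1)) ep); rewrite !ffunE.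
  have eb : u b = u' b by move: (congr1 (fun f : {ffun 'I_2 -> T} => f (@ord_max 1)) ep); rewrite !ffunE.
  move/eqP: neq; apply.
  case: hA => hd; case: hA' => hd'.
  + by apply: (Fu _ _ _ _ _ Hd Hd'); rewrite ?hd ?hd' va.
  + have [E1 E2 E3] := Fa _ _ _ Hd hd; have [H1 _] := Fb _ _ _ Hd' hd'.
    by move: E3; rewrite ea H1 ?va // irr.
  + have [E1 E2 E3] := Fa _ _ _ Hd' hd'; have [H1 _] := Fb _ _ _ Hd hd.
    by move: E3; rewrite -ea H1 ?va // irr.
  + have [H1 _] := Fb _ _ _ Hd hd; have [H1' _] := Fb _ _ _ Hd' hd'.
    by apply: eqb => // i hi; rewrite H1 // H1'.
Qed.

Lemma colorable_of (V W : finType) (eV : rel V) (eW : rel W) (phi : V -> W) k :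
  injective phi -> (forall x y, eV x y -> eW (phi x) (phi y)) ->
  inj_colorable eW k -> inj_colorable eV k.
Proof.
move=> inj hom /existsP[f /forallP Hf]; apply/existsP; exists [ffun x => f (phi x)].
apply/forallP => u; apply/forallP => w; rewrite !ffunE; apply/implyP.
move=> /andP[neq hfe]; apply/negP => /existsP[x /andP[h1 h2]].
have := Hf (phi u); move/forallP/(_ (phi w))/implyP.
rewrite hfe andbT (inj_eq inj) neq => /(_ isT) /negP; apply.
by apply/existsP; exists (phi x); rewrite !hom.
Qed.

Lemma lower (T : finType) (e : rel T) m k :
  inj_colorable (sierp_adj e m.+2) k -> inj_colorable (sierp_adj e 2) k.
Proof.
case: (pickP (@predT T)) => [t0 _ | H].
- pose phi (u : {ffun 'I_2 -> T}) : {ffun 'I_m.+2 -> T} :=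
    [ffun i : 'I_m.+2 => if i < m then t0 else u (inord (i - m))].
  have phiE : forall u (i : 'I_m.+2), m <= i -> phi u i = u (inord (i - m)).
    by move=> u i h; rewrite ffunE ltnNge h.
  have inE : forall j : 'I_2, (inord (m + j) : 'I_m.+2) = m + j :> nat.
    by move=> j; rewrite inordK //; have := ltn_ord j; lia.
  have i2 : forall j : 'I_2, (inord (m + j - m) : 'I_2) = j.
    by move=> j; apply/val_inj; rewrite /= inordK; have := ltn_ord j; lia.
  apply: (colorable_of (phi := phi)).
  + move=> u u' h; apply/ffunP => j.
    have := congr1 (fun f : {ffun 'I_m.+2 -> T} => f (inord (m + j))) h.
    by rewrite /= !phiE ?inE ?leq_addr // i2.
  + move=> u x /sierpP[d [H1 H2 H3]]; apply/sierpP.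
    exists (inord (m + d)); split.
    * move=> i hi; rewrite !ffunE; case: ifP => // him.
      move/negbT: him; rewrite -leqNgt => him.
      rewrite inE in hi; have lti := ltn_ord i.
      apply: H1; rewrite inordK; lia.
    * by rewrite !phiE ?inE ?leq_addr // i2.
    * move=> i hi; rewrite inE in hi.
      rewrite !phiE ?inE ?leq_addr //; try lia.
      rewrite i2; apply: H3; rewrite inordK; first lia.
      have := ltn_ord i; lia.
- move=> _; apply/existsP.
  exists [ffun x : {ffun 'I_2 -> T} => False_rect 'I_k (Bool.diff_true_false (H (x ord0)))].
  by apply/forallP => u; case: (Bool.diff_true_false (H (u ord0))).
Qed.

Theorem mainTheorem1 (T : finType) (e : rel T) (n : nat) :
  symmetric e -> irreflexive e -> 2 <= n ->
  inj_chi (sierp_adj e 2) <= inj_chi (sierp_adj e n) <= (inj_chi (sierp_adj e 2)).+1.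
Proof.
move=> _ irr; case: n => [|[|m]] // _.
rewrite /inj_chi.
case: ex_minnP => k2 H2 min2; case: ex_minnP => kn Hn minn.
apply/andP; split.
- by apply: min2; apply: (lower Hn).
- by apply: minn; apply: upper.
Qed.
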